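(* In the setting of the context, for every resolution $\mathcal{A}$ and every unit $G$, the set of units that are visible to $G$ in $\mathcal{A}$ is countable.
   Context: Formulas are built from atoms by $\neg$ (on atoms only), binary $\wedge,\vee$ and unary $!$ (branching recurrence) and $?$ (branching corecurrence). Units. Fix a formula $\mathbb{F}_0$. Oformulas are occurrences of subformulas of $\mathbb{F}_0$. Politerals are occurrences of literals $P$ or $\neg P$ not in the scope of $\neg$. The modal depth of an oformula is the number of its proper superoccurrences of the form $!E$ or $?E$. A unit is $E[\vec x]$, with $E$ an oformula and $\vec x$ a tuple of infinite bitstrings of length equal to the modal depth of $E$. Parenthood: $G_i[\vec x]$ ($i=0,1$) are the children of $(G_0\wedge G_1)[\vec x]$ and of $(G_0\vee G_1)[\vec x]$; the $G[\vec x,y]$ for all infinite bitstrings $y$ are the children of $!G[\vec x]$ and of $?G[\vec x]$. Subunit and superunit are the reflexive-transitive closures of child and its converse. The $\mathbb{F}_0$-origin $\tilde E$ of $E[\vec x]$ is $E$. Politeral, $!$- and $?$-units are defined by their origin. The smallest common superunit of two units is their common superunit lying below all common superunits. Resolutions and driving. A resolution $\mathcal{A}$ maps each $!$-unit $!\tilde E[\vec y]$ to ''Unresolved'' or to an infinite bitstring $x$. In the latter case it is $\mathcal{A}$-resolved with $\mathcal{A}$-resolvent $\tilde E[\vec y,x]$. $E$ drives $G$ through $H$ iff $H$ is the smallest common superunit of $E,G$ and no proper $?$-superunit of $E$ is a subunit of $H$. $E$ $\mathcal{A}$-strictly drives $G$ iff, for some $H$, $E$ drives $G$ through $H$ and every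 $!$-unit that is a proper superunit of $E$ and a subunit of $H$ is $\mathcal{A}$-resolved with $E$ a subunit of its resolvent. Funits. A funit is $E[\vec w]$ with finite bitstrings $\vec w$. Addresses: $\mathbb{F}_0[\,]$ has the empty address; if $\alpha$ is the address of $E[\vec w]$, then $G_i[\vec w]$ has address $\alpha i.$ and $G[\vec w,u]$ has address $\alpha u.$. $E[\vec w]$ is a funital restriction of $E[\vec x]$ iff each $w_j$ is a prefix of $x_j$. The height of a funit is the maximal length of its bitstrings (or $0$), and it is regular iff all its bitstrings have equal length. Making the numeric move $a$ in a funit with address $\alpha$ means making the move $\alpha a$. Projections. For a run $\Theta$ and a string $\alpha$, $\Theta^\alpha$ keeps the labmoves whose move begins with $\alpha$ and deletes that prefix. $\Theta^{\preceq y}$ keeps the labmoves $\wp\,u.\beta$ with $u$ a finite prefix of $y$ and deletes ''$u.$''. The projection of $\Omega$ on $\mathbb{F}_0[\,]$ is $\Omega$; on children it is $\Theta^{i.}$ for $\wedge/\vee$-units and $\Theta^{\preceq y}$ for $!/?$-units, where $\Theta$ is the projection on the parent. The run $\Omega$. A funit is $\Phi$-active iff position $\Phi$ contains a move $\alpha\beta$ with $\alpha$ its address. A $\Phi$-prompt is a regular politeral funit whose tuple is empty or whose height is the least integer exceeding the heights of all $\Phi$-active funits. $\Omega$ is produced by a play in rounds. In each round, with $\Phi$ the position at the round's start, player $\bot$ lists the $\Phi$-prompts lexicographically and, for each in turn, makes in it the numeric move $a$, where $a$ is the least natural number not yet made as a numeric move by either player. Then the adversary $\top$ (an arbitrary HPM)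 makes at most one move. $\Omega$ is assumed legal: every move has the form $\alpha a$ with $\alpha$ the address of a politeral funit and $a$ a decimal numeral. Opposite politeral units $L,M$: $\tilde L,\tilde M$ are literals one of which is the negation of the other, and for each $\wp\in\{\top,\bot\}$ the set of $\wp$-labeled moves in the projection of $\Omega$ on $L$ equals the set of $\neg\wp$-labeled moves in the projection on $M$. Visibility. A visibility chain in $\mathcal{A}$ is a nonempty sequence $L_1,M_1,\dots,L_n,M_n$ of politeral units with each $L_i,M_i$ opposite and, for $i<n$, $M_i$ $\mathcal{A}$-strictly driving $L_{i+1}$. Its head is $L_1$ and its tail is $M_n$. A unit $E$ is visible to a unit $G$ in $\mathcal{A}$ iff either $E$ $\mathcal{A}$-strictly drives $G$, or there is a visibility chain in $\mathcal{A}$ whose head is $\mathcal{A}$-strictly driven by $E$ and whose tail $\mathcal{A}$-strictly drives $G$. *)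

(* Defs.v *)
From mathcomp Require Import all_boot.
From Stdlib Require Import Relations.Relation_Operators.

Set Implicit Arguments.
Unset Strict Implicit.
Unset Printing Implicit Defensive.

Inductive formula : Type :=
| Pos of nat
| Neg of nat            (* literal ~ P_n (negation on atoms only) *)
| Conj of formula & formula
| Disj of formula & formula
| Bang of formula
| Quest of formula.

(* An occurrence of a subformula of F0 (an "oformula") is given by its
   path from the root: 0 / 1 = left / right child of a binary node,
   2 = the unique child of a ! or ? node. *)
Fixpoint subf (f : formula) (p : seq nat) : option formula :=
  match p with
  | [::] => Some f
  | i :: p' =>
    match f with
    | Conj a b | Disj a b =>
        if i == 0 then subf a p' else if i == 1 then subf b p' else None
    | Bang a | Quest a => if i == 2 then subf a p' else None
    | _ => None
    end
  end.

(* modal depth = number of proper superoccurrences of the form !E or ?E *)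
Definition depth (p : seq nat) : nat := count (pred1 2) p.

Definition is_lit (o : option formula) : bool :=
  match o with Some (Pos _) | Some (Neg _) => true | _ => false end.
Definition is_bangf (o : option formula) : bool :=
  match o with Some (Bang _) => true | _ => false end.
Definition is_questf (o : option formula) : bool :=
  match o with Some (Quest _) => true | _ => false end.

(* Units E[x]: an oformula of F0 together with a tuple of infinite
   bitstrings (nat -> bool) of length the modal depth of E. *)
Record Un (F0 : formula) := MkUn {
  upath : seq nat;
  ubits : seq (nat -> bool);
  uvalid : isSome (subf F0 upath) && (size ubits == depth upath) }.

Section Units.
Variable F0 : formula.

Definition child (E G : Un F0) : Prop :=
  ((exists i, i < 2 /\ upath G = rcons (upath E) i) /\ ubits G = ubits E)
  \/ (upath G = rcons (upath E) 2 /\ exists y, ubits G = rcons (ubits E) y).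

(* E is a subunit of H (H is a superunit of E) *)
Definition subunit (E H : Un F0) : Prop := clos_refl_trans (Un F0) child H E.

Definition proper_superunit (K E : Un F0) : Prop := subunit E K /\ K <> E.

Definition origin (E : Un F0) : option formula := subf F0 (upath E).
Definition is_politeral (E : Un F0) : bool := is_lit (origin E).
Definition is_bang (E : Un F0) : bool := is_bangf (origin E).
Definition is_quest (E : Un F0) : bool := is_questf (origin E).

Definition smallest_common_superunit (E G H : Un F0) : Prop :=
  subunit E H /\ subunit G H /\
  forall H', subunit E H' -> subunit G H' -> subunit H H'.

(* A resolution: maps !-units to Unresolved (None) or a bitstring (Some x);
   its values on non-!-units are irrelevant. *)
Definition resolution := Un F0 -> option (nat -> bool).

Definition drives_through (E G H : Un F0) : Prop :=
  smallest_common_superunit E G H /\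
  forall K, is_quest K -> proper_superunit K E -> ~ subunit K H.

Definition strictly_drives (A : resolution) (E G : Un F0) : Prop :=
  exists H, drives_through E G H /\
  forall K, is_bang K -> proper_superunit K E -> subunit K H ->
    exists x, A K = Some x /\
      exists R : Un F0, upath R = rcons (upath K) 2 /\
                        ubits R = rcons (ubits K) x /\ subunit E R.

End Units.

(* Strings / moves.  A move is a string over the alphabet {'.','0',..,'9'}
   encoded as seq nat: '.' is 0 and the digit d is d.+1 (so that the
   natural order on codes is the ASCII order). *)
Definition dot : nat := 0.
Definition dig (d : nat) : nat := d.+1.
Definition bitsym (b : bool) : nat := dig (nat_of_bool b).

(* labelled moves: true = player Top, false = player Bot *)
Definition labmove := (bool * seq nat)%type.
Definition run_set := labmove -> Prop.

Fixpoint addr (p : seq nat) (ws : seq (seq bool)) : seq nat :=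
  match p with
  | [::] => [::]
  | i :: p' =>
    if i == 2 then
      match ws with
      | w :: ws' => map bitsym w ++ dot :: addr p' ws'
      | [::] => [::]
      end
    else [:: dig i; dot] ++ addr p' ws
  end.

Definition projB (i : nat) (S : run_set) : run_set :=
  fun lm => S (lm.1, [:: dig i; dot] ++ lm.2).
Definition projU (y : nat -> bool) (S : run_set) : run_set :=
  fun lm => exists k, S (lm.1, map bitsym (mkseq y k) ++ dot :: lm.2).

Fixpoint projr (p : seq nat) (xs : seq (nat -> bool)) (S : run_set) : run_set :=
  match p with
  | [::] => S
  | i :: p' =>
    if i == 2 then
      match xs with
      | y :: xs' => projr p' xs' (projU y S)
      | [::] => S
      end
    else projr p' xs (projB i S)
  end.

Definition proj (F0 : formula) (S : run_set) (E : Un F0) : run_set :=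
  projr (upath E) (ubits E) S.

Section Run.
Variable F0 : formula.

Fixpoint paths (f : formula) : seq (seq nat) :=
  [::] :: match f with
          | Conj a b | Disj a b => map (cons 0) (paths a) ++ map (cons 1) (paths b)
          | Bang a | Quest a => map (cons 2) (paths a)
          | _ => [::]
          end.

Fixpoint bits (n : nat) : seq (seq bool) :=
  if n is n'.+1 then [seq b :: w | b <- [:: false; true], w <- bits n']
  else [:: [::]].

Fixpoint tuples_of (ws : seq (seq bool)) (d : nat) : seq (seq (seq bool)) :=
  if d is d'.+1 then [seq w :: t | w <- ws, t <- tuples_of ws d']
  else [:: [::]].

Definition bits_upto (L : nat) : seq (seq bool) :=
  flatten [seq bits i | i <- iota 0 L.+1].

Definition funits_upto (L : nat) : seq (seq nat * seq (seq bool)) :=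
  [seq (p, t) | p <- paths F0, t <- tuples_of (bits_upto L) (depth p)].

Definition fheight (ws : seq (seq bool)) : nat := foldr maxn 0 (map size ws).

Definition active (Phi : seq labmove) (f : seq nat * seq (seq bool)) : bool :=
  has (fun lm => prefix (addr f.1 f.2) lm.2) Phi.

Definition maxlen (Phi : seq labmove) : nat := foldr maxn 0 [seq size lm.2 | lm <- Phi].

(* the least natural number exceeding the heights of all Phi-active funits
   (every active funit has all its bitstrings of length <= maxlen Phi) *)
Definition next_height (Phi : seq labmove) : nat :=
  let act := [seq f <- funits_upto (maxlen Phi) | active Phi f] in
  if act is [::] then 0 else (foldr maxn 0 [seq fheight f.2 | f <- act]).+1.

(* Phi-prompts: regular politeral funits whose tuple is empty or whose
   height is next_height Phi *)
Definition prompts (Phi : seq labmove) : seq (seq nat * seq (seq bool)) :=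
  let h := next_height Phi in
  [seq (p, t) | p <- [seq p <- paths F0 | is_lit (subf F0 p)],
                t <- tuples_of (bits h) (depth p)].

Fixpoint lexle (s t : seq nat) : bool :=
  match s, t with
  | [::], _ => true
  | _ :: _, [::] => false
  | a :: s', b :: t' => (a < b) || ((a == b) && lexle s' t')
  end.

Definition prompt_addrs (Phi : seq labmove) : seq (seq nat) :=
  sort lexle [seq addr f.1 f.2 | f <- prompts Phi].

(* numeric part of a move: the (nonempty, all-digit) suffix after the last dot *)
Definition numeral_value (a : seq nat) : nat := foldl (fun acc s => acc * 10 + s.-1) 0 a.
Definition is_numeral (a : seq nat) : bool := (a != [::]) && all (fun s => 0 < s <= 10) a.
Definition numeric_part (m : seq nat) : option nat :=
  let r := rev m in
  let a := rev (take (index dot r) r) in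
  if is_numeral a then Some (numeral_value a) else None.

Definition used (Phi : seq labmove) (n : nat) : bool :=
  has (fun lm => numeric_part lm.2 == Some n) Phi.

Definition fresh (Phi : seq labmove) : nat :=
  find (fun n => ~~ used Phi n) (iota 0 (size Phi).+1).

Fixpoint dec_aux (fuel n : nat) : seq nat :=
  if fuel is f.+1 then
    (if n < 10 then [:: dig n] else rcons (dec_aux f (n %/ 10)) (dig (n %% 10)))
  else [::].
Definition decimal (n : nat) : seq nat := dec_aux n.+1 n.

Definition botmoves (Phi : seq labmove) : seq labmove :=
  foldl (fun acc alpha => rcons acc (false, alpha ++ decimal (fresh (Phi ++ acc))))
        [::] (prompt_addrs Phi).

(* positions at round starts; top k is the (at most one) move of the
   adversary in round k *)
Fixpoint position (top : nat -> option (seq nat)) (k : nat) : seq labmove :=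
  if k is k'.+1 then
    let Phi := position top k' in
    let Phi' := Phi ++ botmoves Phi in
    Phi' ++ (if top k' is Some m then [:: (true, m)] else [::])
  else [::].

Definition Omega (top : nat -> option (seq nat)) : run_set :=
  fun lm => exists k, lm \in position top k.

Definition legal (S : run_set) : Prop :=
  forall lm, S lm -> exists (p : seq nat) (ws : seq (seq bool)) (a : seq nat),
    [/\ is_lit (subf F0 p), size ws = depth p, is_numeral a &
        lm.2 = addr p ws ++ a].

End Run.

Section Visibility.
Variable F0 : formula.
Variable Om : run_set.
Variable A : resolution F0.

Definition complementary (o1 o2 : option formula) : bool :=
  match o1, o2 with
  | Some (Pos a), Some (Neg b) | Some (Neg a), Some (Pos b) => a == b
  | _, _ => false
  end.

Definition opposite (L M : Un F0) : Prop :=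
  complementary (origin L) (origin M) /\
  forall (b : bool) (m : seq nat), proj Om L (b, m) <-> proj Om M (~~ b, m).

(* visibility chain L1,M1,...,Ln,Mn given as the list of pairs (Li,Mi) *)
Fixpoint chain (c : list (Un F0 * Un F0)) : Prop :=
  match c with
  | [::] => True
  | [:: (L, M)] => opposite L M
  | (L, M) :: ((L', _) :: _) as rest =>
      opposite L M /\ strictly_drives A M L' /\ chain rest
  end.

Definition visible (E G : Un F0) : Prop :=
  strictly_drives A E G \/
  exists (L1 M1 : Un F0) (rest : list (Un F0 * Un F0)),
    chain ((L1, M1) :: rest) /\
    strictly_drives A E L1 /\
    strictly_drives A (last (L1, M1) rest).2 G.

End Visibility.

Definition countable (T : Type) (P : T -> Prop) : Prop :=
  exists f : nat -> T, forall x, P x -> exists n, f n = x.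

(* Main.v *)
Require Import Defs.
From mathcomp Require Import all_boot.
From Stdlib Require Import FunctionalExtensionality ClassicalEpsilon Classical Relations.Relation_Operators.
Set Implicit Arguments. Unset Strict Implicit. Unset Printing Implicit Defensive.

Lemma numeral_value_rcons s d : numeral_value (rcons s d) = numeral_value s * 10 + d.-1.
Proof. by rewrite /numeral_value foldl_rcons. Qed.

Lemma dec_aux_ok f n : n < f ->
  [/\ dec_aux f n != [::], all (fun s => 0 < s <= 10) (dec_aux f n) &
      numeral_value (dec_aux f n) = n].
Proof.
elim: f n => [|f IH] n //= Hn.
case: ifP => Hn10.
  by rewrite /dig /numeral_value /= Hn10.
have Hf : n %/ 10 < f.
  rewrite ltnS in Hn. apply: leq_trans Hn. rewrite ltn_Pdiv //.
  by case: (n) Hn10.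
case: (IH _ Hf) => _ H1 H2.
split.
- by case: (dec_aux _ _).
- rewrite all_rcons H1 andbT /dig /= ltnS. by rewrite -ltnS ltn_mod.
- by rewrite numeral_value_rcons H2 /dig /= -divn_eq.
Qed.

Lemma decimal_ok n : [/\ decimal n != [::], all (fun s => 0 < s <= 10) (decimal n) &
      numeral_value (decimal n) = n].
Proof. exact: dec_aux_ok. Qed.

Definition addrlike (a : seq nat) := a = [::] \/ exists s, a = rcons s dot.

Lemma numeric_part_dec a n : addrlike a -> numeric_part (a ++ decimal n) = Some n.
Proof.
move=> Ha. case: (decimal_ok n) => H0 H1 H2.
have Hnd : dot \notin rev (decimal n).
  rewrite mem_rev; apply/negP => Hd. by move/allP: H1 => /(_ _ Hd).
rewrite /numeric_part rev_cat.
have -> : index dot (rev (decimal n) ++ rev a) = size (rev (decimal n)).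
  rewrite index_cat (negbTE Hnd).
  case: Ha => [->|[s ->]]; first by rewrite addn0.
  by rewrite rev_rcons /= addn0.
rewrite take_size_cat // revK.
by rewrite /is_numeral H0 H1 H2.
Qed.

Lemma fresh_unused Phi : ~~ used Phi (fresh Phi).
Proof.
rewrite /fresh.
set P := (fun n => ~~ used Phi n).
have Hh : has P (iota 0 (size Phi).+1).
  apply/negPn/negP => /hasPn Hall.
  have Hsub : {subset [seq Some n | n <- iota 0 (size Phi).+1] <=
                      [seq numeric_part lm.2 | lm <- Phi]}.
    move=> o /mapP [n Hn ->]. have := Hall n Hn. rewrite /P negbK.
    case/hasP => lm Hlm /eqP <-. exact: map_f.
  have := uniq_leq_size _ Hsub.
  have Hu : uniq [seq Some n | n <- iota 0 (size Phi).+1].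
    rewrite map_inj_uniq ?iota_uniq //. by move=> x y [].
  by rewrite !size_map size_iota ltnn => /(_ Hu).
have := nth_find 0 Hh. rewrite /P nth_iota ?add0n //.
by rewrite -[X in _ < X](size_iota 0) -has_find.
Qed.
Definition good (s : seq labmove) := forall j, j < size s ->
  (nth (true, [::]) s j).1 = false ->
  exists n, numeric_part (nth (true, [::]) s j).2 = Some n /\ ~~ used (take j s) n.

Lemma good_rcons s x : good s ->
  (x.1 = false -> exists n, numeric_part x.2 = Some n /\ ~~ used s n) ->
  good (rcons s x).
Proof.
move=> Hs Hx j; rewrite size_rcons ltnS leq_eqVlt => /orP [/eqP ->|Hj].
  by rewrite nth_rcons ltnn eqxx -cats1 take_size_cat.
rewrite nth_rcons Hj -cats1 takel_cat; last exact: ltnW.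
exact: Hs.
Qed.

Lemma good_unique s a b : good s -> a \in s -> b \in s -> a.1 = false -> b.1 = false ->
  numeric_part a.2 = numeric_part b.2 -> a = b.
Proof.
move=> Hs.
wlog Hle : a b / index a s <= index b s.
  move=> W Ha Hb Ha1 Hb1 Hab.
  case: (leqP (index a s) (index b s)) => H; first exact: W.
  by apply/esym/W => //; apply: ltnW.
move=> Ha Hb Ha1 Hb1 Hab.
move: Hle; rewrite leq_eqVlt => /orP [/eqP E|Hlt].
  by rewrite -(nth_index (true,[::]) Ha) E nth_index.
have Hbs : index b s < size s by rewrite index_mem.
have := Hs _ Hbs. rewrite nth_index // => /(_ Hb1) [n [Hn Hu]].
exfalso; move/negP: Hu; apply.
apply/hasP; exists a; last by rewrite Hab Hn.
rewrite -(nth_index (true,[::]) Ha) -(nth_take (true,[::]) Hlt).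
by rewrite mem_nth // size_take Hbs.
Qed.

Lemma addr_like p ws : addrlike (addr p ws).
Proof.
elim: p ws => [|i p IH] ws /=; first by left.
case: ifP => _.
  case: ws => [|w ws]; first by left.
  right. case: (IH ws) => [->|[s ->]].
    by exists (map bitsym w); rewrite cats1.
  by exists (map bitsym w ++ dot :: s); rewrite rcons_cat.
right. case: (IH ws) => [->|[s ->]]; first by exists [:: dig i].
by exists ([:: dig i; dot] ++ s); rewrite rcons_cat.
Qed.

Lemma foldl_bot Phi alphas acc :
  good (Phi ++ acc) -> (forall a, a \in alphas -> addrlike a) ->
  let r := foldl (fun acc alpha => rcons acc (false, alpha ++ decimal (fresh (Phi ++ acc))))
        acc alphas in
  [/\ good (Phi ++ r),
      forall a, a \in alphas -> exists n, (false, a ++ decimal n) \in r &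
      forall x, x \in acc -> x \in r].
Proof.
elim: alphas acc => [|a al IH] acc Hg Hal /=; first by split.
set acc' := rcons acc _.
have Hg' : good (Phi ++ acc').
  rewrite /acc' -rcons_cat. apply: good_rcons => // _ /=.
  exists (fresh (Phi ++ acc)); split; last exact: fresh_unused.
  apply: numeric_part_dec; apply: Hal; exact: mem_head.
have Hal' : forall b, b \in al -> addrlike b by move=> b Hb; apply: Hal; rewrite inE Hb orbT.
case: (IH acc' Hg' Hal') => H1 H2 H3; split => //.
- move=> b; rewrite inE => /orP [/eqP ->|Hb]; last exact: H2.
  exists (fresh (Phi ++ acc)); apply: H3. by rewrite /acc' mem_rcons mem_head.
- move=> x Hx; apply: H3; by rewrite /acc' mem_rcons inE Hx orbT.
Qed.

Lemma botmoves_ok F0 Phi : good Phi ->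
  [/\ good (Phi ++ botmoves F0 Phi) &
      forall a, a \in prompt_addrs F0 Phi -> exists n, (false, a ++ decimal n) \in botmoves F0 Phi].
Proof.
move=> Hg.
have Hg0 : good (Phi ++ [::]) by rewrite cats0.
have Hal : forall a, a \in prompt_addrs F0 Phi -> addrlike a.
  move=> a; rewrite /prompt_addrs mem_sort => /mapP [f _ ->]; exact: addr_like.
by case: (foldl_bot Hg0 Hal).
Qed.

Section Pos.
Variable F0 : formula.
Variable top : nat -> option (seq nat).
Notation pos := (position F0 top).

Lemma pos_good k : good (pos k).
Proof.
elim: k => [|k IH] /=; first by move=> j.
case: (botmoves_ok F0 IH) => H1 _.
case: (top k) => [m|]; last by rewrite cats0.
by rewrite cats1; apply: good_rcons.
Qed.

Lemma pos_mono k K x : k <= K -> x \in pos k -> x \in pos K.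
Proof.
elim: K => [|K IH]; first by rewrite leqn0 => /eqP ->.
rewrite leq_eqVlt => /orP [/eqP ->//|]; rewrite ltnS => Hk Hx /=.
by rewrite !mem_cat IH.
Qed.

Lemma omega_unique a b : Omega F0 top a -> Omega F0 top b -> a.1 = false -> b.1 = false ->
  numeric_part a.2 = numeric_part b.2 -> a = b.
Proof.
move=> [k1 H1] [k2 H2].
have Hg : good (pos (maxn k1 k2)) := @pos_good (maxn k1 k2).
apply: (good_unique Hg).
- by apply: pos_mono H1; rewrite leq_maxl.
- by apply: pos_mono H2; rewrite leq_maxr.
Qed.

Lemma prompt_move k a : a \in prompt_addrs F0 (pos k) ->
  exists n, (false, a ++ decimal n) \in pos k.+1.
Proof.
move=> Ha. case: (botmoves_ok F0 (@pos_good k)) => _ /(_ _ Ha) [n Hn].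
by exists n => /=; rewrite !mem_cat Hn orbT.
Qed.

End Pos.
Lemma mem_bits w : w \in bits (size w).
Proof.
elim: w => [|b w IH]; first by [].
apply/allpairsP; exists (b, w); split => //; by case: b.
Qed.

Lemma mem_tuples ws t : (forall w, w \in t -> w \in ws) -> t \in tuples_of ws (size t).
Proof.
elim: t => [|w t IH] Ht; first by rewrite /= inE.
apply/allpairsP; exists (w, t); split => //; first by apply: Ht; exact: mem_head.
by apply: IH => x Hx; apply: Ht; rewrite inE Hx orbT.
Qed.

Lemma subf_paths f p : subf f p <> None -> p \in paths f.
Proof.
elim: p f => [|i p IH] f; first by case: f => *; rewrite /= inE.
case: f => [a|a|a b|a b|a|a] /=; rewrite ?inE //=.
- case: ifP => [/eqP -> H|_]; first by rewrite mem_cat map_f ?IH.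
  case: ifP => [/eqP -> H|//]; by rewrite mem_cat (map_f _ (IH _ H)) orbT.
- case: ifP => [/eqP -> H|_]; first by rewrite mem_cat map_f ?IH.
  case: ifP => [/eqP -> H|//]; by rewrite mem_cat (map_f _ (IH _ H)) orbT.
- case: ifP => [/eqP -> H|//]; by rewrite map_f ?IH.
- case: ifP => [/eqP -> H|//]; by rewrite map_f ?IH.
Qed.

Lemma mem_bits_upto L w : size w <= L -> w \in bits_upto L.
Proof.
move=> H; apply/flatten_mapP; exists (size w); last exact: mem_bits.
by rewrite mem_iota add0n ltnS H.
Qed.

Lemma foldr_maxn_ge x s : x \in s -> x <= foldr maxn 0 s.
Proof.
elim: s => [|y s IH] //=; rewrite inE => /orP [/eqP ->|H]; first exact: leq_maxl.
by apply: leq_trans (IH H) (leq_maxr _ _).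
Qed.

Lemma addr_size p ws w : w \in ws -> size ws = depth p -> size w <= size (addr p ws).
Proof.
elim: p ws => [|i p IH] ws; first by case: ws.
rewrite /depth; case: (eqVneq i 2) => [->|Hi] /=.
  case: ws => [|v ws] //; rewrite inE => /orP [/eqP ->|Hw] [Hs].
    by rewrite size_cat size_map leq_addr.
  by rewrite size_cat /= addnS ltnW // ltnS (leq_trans (IH _ Hw Hs)) // leq_addl.
rewrite (negbTE Hi) add0n => Hw Hs. rewrite /=. by apply: leq_trans (IH _ Hw Hs) _; rewrite -addn2 leq_addr.
Qed.

Lemma foldr_maxn_le h s : (forall x, x \in s -> x <= h) -> foldr maxn 0 s <= h.
Proof.
elim: s => [|y s IH] //= H. rewrite geq_max H ?mem_head // IH // => x Hx.
by apply: H; rewrite inE Hx orbT.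
Qed.

Lemma maxlen_ge Phi lm : lm \in Phi -> size lm.2 <= maxlen Phi.
Proof. by move=> H; apply: foldr_maxn_ge; apply: map_f. Qed.

Lemma prompt_in F0 Phi p t : is_lit (subf F0 p) -> size t = depth p ->
  (forall w, w \in t -> size w = next_height F0 Phi) -> addr p t \in prompt_addrs F0 Phi.
Proof.
move=> Hp Ht Hw. rewrite /prompt_addrs mem_sort.
apply/mapP; exists (p, t) => //.
apply/allpairsPdep; exists p, t; split => //.
  rewrite mem_filter Hp /=; apply: subf_paths. by move: Hp; case: (subf F0 p).
rewrite -Ht; apply: mem_tuples => w Hw'. by rewrite -(Hw _ Hw') mem_bits.
Qed.

Lemma next_height_ge F0 Phi p t : t \in tuples_of (bits_upto (maxlen Phi)) (depth p) ->
  p \in paths F0 -> active Phi (p, t) -> fheight t < next_height F0 Phi.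
Proof.
move=> Ht Hp Ha. rewrite /next_height.
have Hf : (p, t) \in [seq f <- funits_upto F0 (maxlen Phi) | active Phi f].
  rewrite mem_filter Ha /=. apply/allpairsPdep; exists p, t; split => //.
case E: [seq _ <- _ | _] Hf => [|f0 s] //.
rewrite -E => Hf. rewrite ltnS.
by apply: foldr_maxn_ge; apply: (map_f (fun f => fheight f.2) Hf).
Qed.

Lemma mem_tuples_inv ws d t : t \in tuples_of ws d -> size t = d /\ forall w, w \in t -> w \in ws.
Proof.
elim: d t => [|d IH] t /=; first by rewrite inE => /eqP ->.
case/allpairsP => [[w t'] [/= Hw Ht ->]].
case: (IH _ Ht) => H1 H2; split; first by rewrite /= H1.
by move=> v; rewrite inE => /orP [/eqP ->|/H2].
Qed.

Section Growth.
Variable F0 : formula.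
Variable top : nat -> option (seq nat).
Notation pos := (position F0 top).
Variable p0 : seq nat.
Hypothesis Hp0 : is_lit (subf F0 p0).
Hypothesis Hd0 : 0 < depth p0.

Lemma growth k : next_height F0 (pos k) < next_height F0 (pos k.+1).
Proof.
set h := next_height F0 (pos k).
set t := nseq (depth p0) (nseq h false).
have Ht : size t = depth p0 by rewrite size_nseq.
have Hw : forall w, w \in t -> size w = h.
  by move=> w /nseqP [-> _]; rewrite size_nseq.
have [n Hn] := prompt_move (prompt_in Hp0 Ht Hw).
have Hwt : nseq h false \in t by rewrite mem_nseq Hd0 eqxx.
have -> : h = fheight t.
  apply/eqP; rewrite eqn_leq; apply/andP; split.
    apply: foldr_maxn_ge. by rewrite -(Hw _ Hwt) map_f.
  apply: foldr_maxn_le => x /mapP [w Hw' ->]. by rewrite (Hw _ Hw').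
apply: (next_height_ge (p := p0)).
- rewrite -Ht; apply: mem_tuples => w Hw'; apply: mem_bits_upto.
  rewrite (Hw _ Hw'). apply: leq_trans (maxlen_ge Hn) => /=.
  rewrite size_cat. apply: leq_trans (leq_addr _ _).
  by have := addr_size Hwt Ht; rewrite size_nseq.
- apply: subf_paths. by move: Hp0; case: (subf F0 p0).
- apply/hasP; exists (false, addr p0 t ++ decimal n) => //. exact: prefix_prefix.
Qed.

Lemma height_unbounded N : exists k, N <= next_height F0 (pos k).
Proof.
exists N; elim: N => [|N IH] //. exact: leq_ltn_trans IH (growth N).
Qed.

End Growth.
Fixpoint pref (xs : seq (nat -> bool)) (ws : seq (seq bool)) : Prop :=
  match xs, ws with
  | [::], [::] => True
  | y :: xs', w :: ws' => w = mkseq y (size w) /\ pref xs' ws'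
  | _, _ => False
  end.

Lemma pref_size xs ws : pref xs ws -> size ws = size xs.
Proof. by elim: xs ws => [|y xs IH] [|w ws] //= [_ /IH ->]. Qed.

Lemma proj_intro p xs ws (S : run_set) b m : size xs = depth p -> pref xs ws ->
  S (b, addr p ws ++ m) -> projr p xs S (b, m).
Proof.
elim: p xs ws S => [|i p IH] xs ws S.
  by case: xs; case: ws.
rewrite /depth; case: (eqVneq i 2) => [->|Hi] /=.
  case: xs => [|y xs] //; case: ws => [|w ws] //= [Hs] [Hw Hp] HS.
  apply: (IH _ ws) => //. exists (size w). by rewrite -Hw /= -cat_cons catA.
rewrite (negbTE Hi) add0n => Hs Hp HS.
by apply: (IH _ ws).
Qed.

Lemma proj_elim p xs (S : run_set) b m : size xs = depth p ->
  projr p xs S (b, m) -> exists ws, pref xs ws /\ S (b, addr p ws ++ m).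
Proof.
elim: p xs S m => [|i p IH] xs S m.
  by case: xs => // _ H; exists [::].
rewrite /depth; case: (eqVneq i 2) => [->|Hi] /=.
  case: xs => [|y xs] //= [Hs] /(IH _ _ _ Hs) [ws [Hp [k Hk]]].
  exists (mkseq y k :: ws); split; first by rewrite size_mkseq.
  by rewrite /= -catA.
rewrite (negbTE Hi) add0n => Hs /(IH _ _ _ Hs) [ws [Hp Hk]].
by exists ws; split => //; rewrite catA.
Qed.

Definition is_modal (f : formula) : bool :=
  match f with Bang _ | Quest _ => true | _ => false end.
Definition childf (f : formula) (i : nat) : formula :=
  match f with Conj a b | Disj a b => if i == 0 then a else b
             | Bang a | Quest a => a | _ => f end.

Lemma subf_cons f i p : subf f (i :: p) <> None ->
  subf f (i :: p) = subf (childf f i) p /\ (i == 2) = is_modal f.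
Proof.
case: f => [a|a|a b|a b|a|a] //=.
- by case: i => [|[|i]].
- by case: i => [|[|i]].
- by case: (eqVneq i 2).
- by case: (eqVneq i 2).
Qed.

Lemma bitsym_inj : injective bitsym. Proof. by case; case. Qed.

Lemma split_dot w v x y : map bitsym w ++ dot :: x = map bitsym v ++ dot :: y -> w = v /\ x = y.
Proof.
elim: w v => [|b w IH] [|c v] /=.
- by case=> ->.
- by case: c.
- by case: b.
- case=> E /IH [-> ->]; split => //. by case: b c E => [] [].
Qed.

Lemma addr_nil p ws : size ws = depth p -> addr p ws = [::] -> p = [::].
Proof.
case: p => [|i p] //. rewrite /depth /=. case: (eqVneq i 2) => [->|Hi] //=.
by case: ws => // w ws _; case: w.
Qed.

Lemma addr_inj f p q ws vs : subf f p <> None -> subf f q <> None ->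
  size ws = depth p -> size vs = depth q -> addr p ws = addr q vs -> p = q /\ ws = vs.
Proof.
elim: p f q ws vs => [|i p IH] f q ws vs Hp Hq Hs Ht Ha.
  have Hq0 : q = [::] by apply: (addr_nil Ht); rewrite -Ha.
  subst q. by move: Hs Ht => /size0nil -> /size0nil ->.
case: q Hq Ht Ha => [|j q] Hq Ht Ha.
  by have := addr_nil Hs Ha.
have [Ep Mi] := subf_cons Hp. have [Eq Mj] := subf_cons Hq.
rewrite Ep in Hp; rewrite Eq in Hq.
move: Hp Hq Hs Ht Ha; rewrite /depth /=.
case: (eqVneq i 2) Mi => [-> Mi|Hi Mi]; case: (eqVneq j 2) Mj => [-> Mj|Hj Mj].
- move=> Hp Hq. case: ws => [|w ws] //; case: vs => [|v vs] //= [Hs] [Ht] /split_dot [-> Ha].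
  by case: (IH _ _ _ _ Hp Hq Hs Ht Ha) => -> ->.
- by move=> *; congruence.
- by move=> *; congruence.
- rewrite !add0n => Hp Hq Hs Ht [Eij Ha].
  subst j. by case: (IH _ _ _ _ Hp Hq Hs Ht Ha) => -> ->.
Qed.

Lemma catIr (T : Type) (s1 s2 t : seq T) : s1 ++ t = s2 ++ t -> s1 = s2.
Proof.
move=> E. have Hs : size s1 = size s2.
  by have := f_equal size E; rewrite !size_cat => /eqP; rewrite eqn_add2r => /eqP.
by rewrite -(take_size_cat t (erefl (size s1))) E take_size_cat.
Qed.

Lemma Un_eq F0 (E E' : Un F0) : upath E = upath E' -> ubits E = ubits E' -> E = E'.
Proof.
case: E => p b h; case: E' => p' b' h' /= Ep Eb; subst.
by rewrite (bool_irrelevance h h').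
Qed.

Lemma pref_map h xs' xs : pref xs' (map (fun y => mkseq y h) xs) ->
  forall j i, i < h -> nth (fun _ => false) xs' j i = nth (fun _ => false) xs j i.
Proof.
elim: xs' xs => [|y' xs' IH] [|y xs] //= [Hy Hp] [|j] i Hi /=.
  have := f_equal (fun s => nth false s i) Hy. by rewrite size_mkseq !nth_mkseq.
exact: IH.
Qed.
Lemma pref_mkseq h xs : pref xs (map (fun y => mkseq y h) xs).
Proof. by elim: xs => [|y xs IH] //=; rewrite size_mkseq. Qed.

Lemma mem_map_mkseq h (xs : seq (nat -> bool)) w :
  w \in map (fun y => mkseq y h) xs -> size w = h.
Proof.
elim: xs => [|y xs IH] //=; rewrite inE => /orP [/eqP ->|/IH //].
by rewrite size_mkseq.
Qed.

Lemma uvalid_some F0 (E : Un F0) : subf F0 (upath E) <> None.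
Proof. by case: E => p b /= /andP []; case: (subf F0 p). Qed.

Lemma uvalid_size F0 (E : Un F0) : size (ubits E) = depth (upath E).
Proof. by case: E => p b /= /andP [_ /eqP]. Qed.

Section ProjUnique.
Variable F0 : formula.
Variable top : nat -> option (seq nat).
Notation pos := (position F0 top).
Notation Om := (Omega F0 top).

Lemma proj_step (L L' : Un F0) : is_politeral L ->
  (forall b m, proj Om L (b, m) -> proj Om L' (b, m)) -> forall k,
  upath L' = upath L /\
  pref (ubits L') (map (fun y => mkseq y (next_height F0 (pos k))) (ubits L)).
Proof.
move=> Hl Hpr k.
set h := next_height F0 (pos k).
set ws := map (fun y => mkseq y h) (ubits L).
have Hws : size ws = depth (upath L) by rewrite size_map uvalid_size.
have Hin : addr (upath L) ws \in prompt_addrs F0 (pos k).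
  apply: prompt_in => //. exact: mem_map_mkseq.
have [n Hn] := prompt_move Hin.
have HO : Om (false, addr (upath L) ws ++ decimal n) by exists k.+1.
have HL : proj Om L (false, decimal n).
  by apply: (proj_intro (uvalid_size L) (pref_mkseq h (ubits L))).
have [ws' [Hp' HO']] := proj_elim (uvalid_size L') (Hpr _ _ HL).
have E := omega_unique HO HO' erefl erefl.
rewrite /= !numeric_part_dec in E; try exact: addr_like.
have /catIr Ea : addr (upath L) ws ++ decimal n = addr (upath L') ws' ++ decimal n.
  have := E erefl. by case.
have Hs' : size ws' = depth (upath L') by rewrite (pref_size Hp') uvalid_size.
have [Ep Ew] := addr_inj (@uvalid_some _ L) (@uvalid_some _ L') Hws Hs' Ea.
by split => //; rewrite Ew.
Qed.

Lemma proj_unique (L L' : Un F0) : is_politeral L ->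
  (forall b m, proj Om L (b, m) <-> proj Om L' (b, m)) -> L = L'.
Proof.
move=> Hl Hpr.
have Hpr' : forall b m, proj Om L (b, m) -> proj Om L' (b, m) by move=> b m /Hpr.
have [Ep _] := proj_step Hl Hpr' 0.
apply: Un_eq => //.
have Hsz : size (ubits L) = size (ubits L') by rewrite !uvalid_size Ep.
apply: (@eq_from_nth _ (fun _ => false)) => // j Hj.
apply: functional_extensionality => i.
case: (posnP (depth (upath L))) => Hd.
  by move: Hj; rewrite uvalid_size Hd.
have Hlit : is_lit (subf F0 (upath L)) by [].
have [k Hk] := height_unbounded top Hlit Hd i.+1.
have [_ Hp] := proj_step Hl Hpr' k.
by rewrite (pref_map Hp).
Qed.

End ProjUnique.
Lemma subf_cat f p q : subf f (p ++ q) = obind (fun g => subf g q) (subf f p).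
Proof.
elim: p f => [|i p IH] f; first by case: f.
case: f => [a|a|a b|a b|a|a] /=.
- by [].
- by [].
- by case: ifP => _; rewrite ?IH //; case: ifP => _; rewrite ?IH.
- by case: ifP => _; rewrite ?IH //; case: ifP => _; rewrite ?IH.
- by case: ifP => _; rewrite ?IH.
- by case: ifP => _; rewrite ?IH.
Qed.

Lemma subf_idx f i p : subf f (i :: p) <> None -> i != 2 -> i < 2.
Proof. by case: i => [|[|[|i]]] //; case: f. Qed.

Lemma depth_cat p q : depth (p ++ q) = depth p + depth q.
Proof. by rewrite /depth count_cat. Qed.

Lemma depth_rcons p i : depth (rcons p i) = depth p + (i == 2).
Proof. by rewrite -cats1 depth_cat /depth /= addn0 eq_sym. Qed.

Lemma prefix_cases (T : Type) (a b x y : seq T) : a ++ x = b ++ y ->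
  size a <= size b -> exists z, b = a ++ z.
Proof.
move=> E Hs. exists (drop (size a) b).
have := f_equal (take (size a)) E. rewrite take_size_cat // takel_cat // => Ea.
by rewrite -{1}(cat_take_drop (size a) b) -Ea.
Qed.

Lemma hb (T : Type) (s : seq T) x0 : 0 < size s -> s = head x0 s :: behead s.
Proof. by case: s. Qed.

Lemma catIr' (T : Type) (a s t : seq T) : a ++ s = a ++ t -> s = t.
Proof. by elim: a => [|x a IH] //= [] /IH. Qed.

Section Sub.
Variable F0 : formula.

Lemma subunit_prefix (E H : Un F0) : subunit E H ->
  (exists s, upath E = upath H ++ s) /\ (exists t, ubits E = ubits H ++ t).
Proof.
rewrite /subunit; elim => [x y Hc|x|x y z _ [[s1 E1] [t1 F1]] _ [[s2 E2] [t2 F2]]].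
- case: Hc => [[[i [_ ->]] ->]|[-> [b ->]]].
    by split; [exists [:: i]; rewrite cats1|exists [::]; rewrite cats0].
  by split; [exists [:: 2]|exists [:: b]]; rewrite cats1.
- by split; exists [::]; rewrite cats0.
- by split; [exists (s1 ++ s2); rewrite E2 E1 catA|exists (t1 ++ t2); rewrite F2 F1 catA].
Qed.

Lemma subunit_of_prefix (E K : Un F0) : (exists s, upath E = upath K ++ s) ->
  (exists t, ubits E = ubits K ++ t) -> subunit E K.
Proof.
move=> [s]; elim: s K => [|i s IH] K Es [t Et].
  have Ht : t = [::].
    apply/size0nil. have := uvalid_size E. rewrite Et Es cats0 size_cat uvalid_size.
    by move/eqP; rewrite -{2}[depth _]addn0 eqn_add2l => /eqP.
  have -> : E = K by apply: Un_eq; rewrite ?Es ?Et ?Ht cats0.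
  exact: rt_refl.
have Hsz : size t = depth (i :: s).
  have := uvalid_size E. rewrite Et Es !size_cat depth_cat uvalid_size.
  by move/eqP; rewrite eqn_add2l => /eqP.
have Hv : subf F0 (rcons (upath K) i) <> None.
  have := @uvalid_some _ E. rewrite Es -cat_rcons subf_cat.
  by case: (subf F0 (rcons (upath K) i)).
pose b1 := if i == 2 then rcons (ubits K) (head (fun _ => false) t) else ubits K.
pose t1 := if i == 2 then behead t else t.
have Hb1 : size b1 = depth (rcons (upath K) i).
  rewrite /b1 depth_rcons -uvalid_size. by case: (i == 2); rewrite ?size_rcons ?addn1 ?addn0.
have Hval : isSome (subf F0 (rcons (upath K) i)) && (size b1 == depth (rcons (upath K) i)).
  rewrite Hb1 eqxx andbT. by case: (subf F0 _) Hv.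
pose K1 := MkUn Hval.
have HK1 : child K K1.
  rewrite /child /K1 /= /b1. case: (eqVneq i 2) => [->|Hi].
    by right; split => //; exists (head (fun _ => false) t).
  left; split => //; exists i; split => //.
  move: Hv; rewrite -cats1 subf_cat; case: (subf F0 (upath K)) => [g|] //= Hg.
  exact: subf_idx Hg Hi.
apply: rt_trans (rt_step _ _ _ _ HK1) _.
apply: IH => /=; first by rewrite cat_rcons.
exists t1; rewrite Et /b1 /t1.
case: (eqVneq i 2) Hsz => [->|_] //.
move=> Hs; rewrite cat_rcons; congr (_ ++ _).
by apply: hb; move: Hs; rewrite /depth /=; case: (t).
Qed.

End Sub.
Lemma split_depth q j : j < depth q -> exists r s, q = r ++ 2 :: s /\ depth r = j.
Proof.
elim: q j => [|a q IH] j //.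
rewrite /depth /=; case: (eqVneq a 2) => [->|Ha] /=.
  case: j => [|j] Hj; first by exists [::], q.
  have : j < depth q by move: Hj; rewrite /depth. 
  move=> /IH [r [s [-> Hr]]]. exists (2 :: r), s; split => //.
  by move: Hr; rewrite /depth /= => ->.
rewrite add0n => /IH [r [s [-> Hr]]]. exists (a :: r), s; split => //.
by move: Hr; rewrite /depth /= (negbTE Ha).
Qed.

Lemma nth_rcons_cat (T : Type) (d : T) s x t : nth d (rcons s x ++ t) (size s) = x.
Proof. by rewrite nth_cat size_rcons ltnSn nth_rcons ltnn eqxx. Qed.

Section Below.
Variable F0 : formula.
Variable A : resolution F0.

Definition cond (H E : Un F0) :=
  subunit E H /\ (forall K, is_quest K -> proper_superunit K E -> ~ subunit K H) /\
  (forall K, is_bang K -> proper_superunit K E -> subunit K H ->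
    exists x, A K = Some x /\
      exists R : Un F0, upath R = rcons (upath K) 2 /\
                        ubits R = rcons (ubits K) x /\ subunit E R).

Lemma below_unique H E E' : cond H E -> cond H E' -> upath E = upath E' -> E = E'.
Proof.
move=> [HE1 [HE2 HE3]] [HE1' [HE2' HE3']] Ep.
have [[s0 Hs0] [t0 Ht0]] := subunit_prefix HE1.
have [_ [t0' Ht0']] := subunit_prefix HE1'.
set bE := ubits E; set bE' := ubits E'.
have Hsz : size bE = size bE' by rewrite !uvalid_size Ep.
have key : forall j, (forall i, i < j -> nth (fun _ => false) bE i = nth (fun _ => false) bE' i) ->
    j < size bE -> nth (fun _ => false) bE j = nth (fun _ => false) bE' j.
  move=> j IH Hj.
  case: (ltnP j (size (ubits H))) => HjH.
    by rewrite /bE /bE' Ht0 Ht0' !nth_cat HjH.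
  have Hjd : j < depth (upath E) by rewrite -uvalid_size.
  have [r [s [Hq Hr]]] := split_depth Hjd.
  have Hsub : subf F0 r <> None.
    have := @uvalid_some _ E. rewrite Hq subf_cat. by case: (subf F0 r).
  have Hkv : isSome (subf F0 r) && (size (take j bE) == depth r).
    rewrite size_take Hj Hr eqxx andbT. by case: (subf F0 r) Hsub.
  pose K := MkUn Hkv.
  have HtE' : take j bE' = take j bE.
    apply: (@eq_from_nth _ (fun _ => false)); first by rewrite !size_take -Hsz.
    move=> i; rewrite size_take -Hsz Hj => Hi.
    by rewrite !nth_take // IH.
  have HEK : subunit E K.
    apply: subunit_of_prefix; first by exists (2 :: s).
    by exists (drop j bE); rewrite /= cat_take_drop.
  have HE'K : subunit E' K.
    apply: subunit_of_prefix; first by exists (2 :: s); rewrite -Ep.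
    by exists (drop j bE'); rewrite /= -HtE' cat_take_drop.
  have HKne : forall E0 : Un F0, upath E0 = upath E -> K <> E0.
    move=> E0 HE0 HK. have := f_equal (fun U => size (upath U)) HK.
    rewrite /= HE0 Hq size_cat /= => /eqP. by rewrite -{1}[size r]addn0 eqn_add2l.
  have HKH : subunit K H.
    apply: subunit_of_prefix => /=.
      have E1 : upath H ++ s0 = r ++ 2 :: s by rewrite -Hs0 -Hq.
      case: (leqP (size (upath H)) (size r)) => Hl; first exact: (prefix_cases E1 Hl).
      have [z Hz] := prefix_cases (esym E1) (ltnW Hl).
      move: E1; rewrite Hz -catA => /catIr' E2.
      exfalso. case: z Hz E2 => [|a z] Hz E2.
        by move: Hl; rewrite Hz cats0 ltnn.
      case: E2 => Ea _. subst a.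
      have : depth (upath H) <= j by rewrite -uvalid_size.
      by rewrite Hz depth_cat -Hr /depth /= add1n addnS ltnNge leq_addr.
    exists (take (j - size (ubits H)) t0).
    by rewrite /bE Ht0 take_cat ltnNge HjH /=.
  have [g Hg] : exists g, subf F0 r = Some g by case: (subf F0 r) Hsub => [g|] //; exists g.
  have Hm : is_modal g.
    have := @uvalid_some _ E. rewrite Hq subf_cat Hg /= => Hg2.
    by have [_ <-] := subf_cons Hg2.
  case: g Hg Hm => // a Hg _.
  - have Hb : is_bang K by rewrite /is_bang /origin /= Hg.
    have [x [HAx [R [HR1 [HR2 HR3]]]]] := HE3 K Hb (conj HEK (HKne E erefl)) HKH.
    have [x' [HAx' [R' [HR1' [HR2' HR3']]]]] := HE3' K Hb (conj HE'K (HKne E' (esym Ep))) HKH.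
    have Hxx : x = x' by congruence.
    have [_ [t1 Ht1]] := subunit_prefix HR3.
    have [_ [t1' Ht1']] := subunit_prefix HR3'.
    have Hsk : size (ubits K) = j by rewrite /= size_take Hj.
    rewrite -Hsk /bE /bE' Ht1 Ht1' HR2 HR2' !nth_rcons_cat. by [].
  - have Hqk : is_quest K by rewrite /is_quest /origin /= Hg.
    by exfalso; apply: (HE2 K Hqk (conj HEK (HKne E erefl)) HKH).
apply: Un_eq => //.
apply: (@eq_from_nth _ (fun _ => false)) => // j.
elim: j {-2}j (leqnn j) => [|n IHn] j Hjn Hj.
  rewrite leqn0 in Hjn. rewrite (eqP Hjn) in Hj *. by apply: key.
apply: key => // i Hi. apply: IHn; last exact: ltn_trans Hi Hj.
by rewrite -ltnS (leq_trans Hi Hjn).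
Qed.

End Below.
Section Count.
Variable T : Type.
Variable dflt : T.

Lemma countable_key (P : T -> Prop) (key : T -> seq nat) :
  (forall x y, P x -> P y -> key x = key y -> x = y) -> countable P.
Proof.
move=> Hu.
exists (fun n => match unpickle n with
         | Some q => epsilon (inhabits dflt) (fun x => P x /\ key x = q)
         | None => dflt end).
move=> x Hx; exists (pickle (key x)); rewrite pickleK.
have [H1 H2] := epsilon_spec (inhabits dflt) (fun y => P y /\ key y = key x) (ex_intro _ x (conj Hx erefl)).
exact: Hu.
Qed.

Lemma countable_sub (P Q : T -> Prop) : (forall x, P x -> Q x) -> countable Q -> countable P.
Proof. by move=> H [f Hf]; exists f => x /H /Hf. Qed.

Lemma countable_or (P Q : T -> Prop) : countable P -> countable Q ->
  countable (fun x => P x \/ Q x).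
Proof.
move=> [f Hf] [g Hg]; exists (fun n => if odd n then g n./2 else f n./2).
move=> x [/Hf [n <-]|/Hg [n <-]].
  by exists n.*2; rewrite odd_double doubleK.
by exists n.*2.+1; rewrite /= odd_double /= uphalf_double.
Qed.

Lemma countable_bind (U : Type) (P : U -> Prop) (Q : U -> T -> Prop) :
  countable P -> (forall x, P x -> countable (Q x)) ->
  countable (fun y => exists x, P x /\ Q x y).
Proof.
move=> [f Hf] HQ.
pose g x := epsilon (inhabits (fun _ : nat => dflt))
   (fun h => P x -> forall y, Q x y -> exists m, h m = y).
have Hg : forall x, P x -> forall y, Q x y -> exists m, g x m = y.
  move=> x; apply: (epsilon_spec (inhabits (fun _ : nat => dflt))
     (fun h => P x -> forall y, Q x y -> exists m, h m = y)).
  case: (classic (P x)) => Hx.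
    by have [h Hh] := HQ x Hx; exists h.
  by exists (fun _ => dflt).
exists (fun n => let ab := odflt (0, 0) (unpickle n) in g (f ab.1) ab.2).
move=> y [x [Hx Hy]].
have [a Ha] := Hf x Hx.
have [b Hb] := Hg x Hx y Hy.
exists (pickle (a, b)). by rewrite pickleK /= Ha.
Qed.

End Count.

Lemma countable_nat : countable (fun _ : nat => True).
Proof. by exists id => x _; exists x. Qed.
Lemma prefix_same_size (T : Type) (a b s t : seq T) : a ++ s = b ++ t -> size a = size b -> a = b.
Proof.
move=> E Hs. have := f_equal (take (size a)) E.
by rewrite take_size_cat // Hs take_size_cat.
Qed.

Section Main.
Variable F0 : formula.
Variable top : nat -> option (seq nat).
Notation Om := (Omega F0 top).
Variable A : resolution F0.
Variable G : Un F0.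

Lemma drives_countable X : countable (fun E => strictly_drives A E X).
Proof.
apply: (countable_sub (Q := fun E => exists H, subunit X H /\ cond A H E)).
  move=> E [H [[[H1 [H2 _]] H3] H4]]. apply: (ex_intro _ H). by split; last split.
apply: (countable_bind G (P := fun H => subunit X H) (Q := fun H E => cond A H E)).
  apply: (countable_key G (key := @upath F0)) => H H' HX HX' Ep.
  apply: Un_eq => //.
  have [_ [t Ht]] := subunit_prefix HX. have [_ [t' Ht']] := subunit_prefix HX'.
  apply: (prefix_same_size (s := t) (t := t')); first by rewrite -Ht -Ht'.
  by rewrite (@uvalid_size _ H) (@uvalid_size _ H') Ep.
move=> H _.
apply: (countable_key G (key := @upath F0)) => E E' HE HE'.
exact: (below_unique HE HE').
Qed.

Lemma opp_countable (M : Un F0) : countable (fun L : Un F0 => opposite Om L M).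
Proof.
apply: (countable_key G (key := fun _ => [::])) => L L' [HL1 HL2] [HL1' HL2'] _.
apply: (proj_unique (top := top)).
  move: HL1; rewrite /is_politeral /complementary.
  case: (origin L) => [[]|] //.
move=> b m. rewrite HL2. by rewrite HL2'.
Qed.

Definition headn n L := exists M1 rest, size rest = n /\ chain Om A ((L, M1) :: rest) /\
  strictly_drives A (last (L, M1) rest).2 G.

Lemma headn_countable n : countable (headn n).
Proof.
elim: n => [|n IH].
  apply: (countable_sub (Q := fun L => exists M, strictly_drives A M G /\ opposite Om L M)).
    by move=> L [M1 [[|x rest] [//= _ [H1 H2]]]]; exists M1.
  apply: (countable_bind G (P := fun M => strictly_drives A M G) (Q := fun M (L : Un F0) => opposite Om L M)); first exact: drives_countable.
  move=> M _; exact: opp_countable.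
apply: (countable_sub (Q := fun L => exists L2, headn n L2 /\
   exists M, strictly_drives A M L2 /\ opposite Om L M)).
  move=> L [M1 [[|[L2 M2] rest] [//= [Hs] [[H1 [H2 H3]] H4]]]].
  exists L2; split; last by exists M1.
  by exists M2, rest.
apply: (countable_bind G (P := headn n) (Q := fun L2 L => exists M, strictly_drives A M L2 /\ opposite Om L M)) => // L2 _.
apply: (countable_bind G (P := fun M => strictly_drives A M L2) (Q := fun M (L : Un F0) => opposite Om L M)); first exact: drives_countable.
move=> M _; exact: opp_countable.
Qed.

Lemma visible_countable : countable (fun E => visible Om A E G).
Proof.
apply: (countable_sub (Q := fun E => strictly_drives A E G \/
   exists n, (fun _ => True) n /\ exists L, headn n L /\ strictly_drives A E L)).
  move=> E [H|[L1 [M1 [rest [H1 [H2 H3]]]]]]; first by left.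
  right; exists (size rest); split => //; exists L1; split => //.
  by exists M1, rest.
apply: countable_or; first exact: drives_countable.
apply: (countable_bind G (P := fun _ : nat => True) (Q := fun n E => exists L, headn n L /\ strictly_drives A E L)); first exact: countable_nat.
move=> n _. apply: (countable_bind G (P := headn n) (Q := fun L E => strictly_drives A E L)); first exact: headn_countable.
move=> L _; exact: drives_countable.
Qed.

End Main.

Theorem lemma7p7 (F0 : formula) (top : nat -> option (seq nat))
  (Hlegal : legal F0 (Omega F0 top))
  (A : resolution F0) (G : Un F0) :
  countable (fun E : Un F0 => visible (Omega F0 top) A E G).
Proof. exact: visible_countable. Qed.
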